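(* Let $k\geq 2$, let $\mathbb Z_0=\mathbb Z\setminus\{0\}$ and let $\{\lambda_j\}_{j\in\mathbb Z_0}$ be positive numbers. If there is a sequence of positive numbers $\{z_j\}_{j\in\mathbb Z_0}$ satisfying $$z_i=\lambda_i\Bigl(\frac{1}{1+\sum_{j\in\mathbb Z_0}z_j}\Bigr)^{k},\qquad i\in\mathbb Z_0,$$ then both series $\sum_{j\in\mathbb Z_0}z_j$ and $\sum_{j\in\mathbb Z_0}\lambda_j$ converge.
   Context: If $\sum_j z_j=+\infty$, the right-hand side is interpreted as $0$. *)

(* Defs.v *)
From HB Require Import structures.
From mathcomp Require Import all_boot all_order all_algebra.
From mathcomp Require Import all_classical all_reals all_analysis.
Set Implicit Arguments. Unset Strict Implicit. Unset Printing Implicit Defensive.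
Import Order.TTheory GRing.Theory Num.Theory.
Local Open Scope classical_set_scope.
Local Open Scope ring_scope.

Definition Z0 : set int := [set j : int | j != 0].

(* Unordered (extended-real) sum over Z_0 of a real family. For nonnegative
   families this is the sum of the series; it is finite iff the series converges. *)
Definition sumZ0 (R : realType) (a : int -> R) : \bar R :=
  (\esum_(j in Z0) (a j)%:E)%E.

Definition inv1p (R : realType) (S : \bar R) : R :=
  if S == +oo%E then 0 else 1 / (1 + fine S).

(* Main.v *)
Require Import Defs.
From HB Require Import structures.
From mathcomp Require Import all_boot all_order all_algebra.
From mathcomp Require Import all_classical all_reals all_analysis.
Import Order.TTheory GRing.Theory Num.Theory.
Local Open Scope ring_scope.

Lemma esum_muln_fin (R : realType) (z : int -> R) :
  (forall j : int, j != 0 -> 0 <= z j) -> (sumZ0 z < +oo)%E ->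
  forall n, (\esum_(j in Z0) (z j *+ n)%:E < +oo)%E.
Proof.
move=> z0 Sf; elim=> [|n IH].
  by rewrite esum1 // => i _; rewrite mulr0n.
rewrite (eq_esum (b := fun j => ((z j)%:E + (z j *+ n)%:E)%E)); last first.
  by move=> i _; rewrite mulrS EFinD.
rewrite esumD; first exact: lte_add_pinfty.
  by move=> i /= Hi; rewrite lee_fin z0.
by move=> i /= Hi; rewrite lee_fin mulrn_wge0 // z0.
Qed.

Theorem mainTheorem3 (R : realType) (k : nat) (lambda z : int -> R) :
  (2 <= k)%N ->
  (forall j : int, j != 0 -> 0 < lambda j) ->
  (forall j : int, j != 0 -> 0 < z j) ->
  (forall i : int, i != 0 -> z i = lambda i * (inv1p (sumZ0 z)) ^+ k) ->
  (sumZ0 z < +oo)%E /\ (sumZ0 lambda < +oo)%E.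
Proof.
move=> hk hl hz hE.
have S0 : (0 <= sumZ0 z)%E.
  by apply: esum_ge0 => x /= Hx; rewrite lee_fin ltW // hz.
have SnI : sumZ0 z != +oo%E.
  apply/negP => /eqP HS.
  have := hE 1 isT; rewrite /inv1p HS eqxx expr0n /=.
  have -> : (k == 0%N) = false by apply/negbTE; rewrite -lt0n (leq_trans _ hk).
  rewrite mulr0 => h1; have := hz 1 isT; by rewrite h1 ltxx.
have Sf : (sumZ0 z < +oo)%E by rewrite ltey.
split => //.
set s := fine (sumZ0 z).
have s0 : 0 <= s by rewrite /s fine_ge0.
have c0 : 0 < 1 / (1 + s) by rewrite divr_gt0 // ltr_wpDr.
have hI : inv1p (sumZ0 z) = 1 / (1 + s) by rewrite /inv1p (negbTE SnI).
set N := Num.truncn ((1 + s) ^+ k).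
have hN : (1 + s) ^+ k <= N.+1%:R by apply: ltW; exact: truncnS_gt.
have z0 : forall j : int, j != 0 -> 0 <= z j by move=> j Hj; apply: ltW; apply: hz.
rewrite /sumZ0; apply: (le_lt_trans _ (@esum_muln_fin R z z0 Sf N.+1)).
apply: le_esum => i /= Hi; rewrite lee_fin.
have hli : lambda i = z i * (1 + s) ^+ k.
  have -> := hE i Hi; rewrite hI -mulrA -exprMn mul1r mulVf ?expr1n ?mulr1 //.
  by apply: lt0r_neq0; rewrite ltr_wpDr.
rewrite hli -mulr_natr; apply: ler_wpM2l => //; exact: z0.
Qed.
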